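(* Let $n\ge 2$ and assume the standing assumptions in the context hold. Let $(\nu,\mu)\in\mathbb{S}^2$ with $\nu\ne\mu$ be such that $\mathcal N_{\nu,\mu}$ is nonempty and $\operatorname{rank}(\Psi_{\nu,\mu})=n$. Then $$T_\mu^{-1}T_\nu=\hat{\mathcal O}_\mu^\dagger\,\mathcal Z_{\nu,\mu}\,\Psi_{\nu,\mu}^\dagger.$$ Here $\hat{\mathcal O}_\mu^\dagger=(\hat{\mathcal O}_\mu^T\hat{\mathcal O}_\mu)^{-1}\hat{\mathcal O}_\mu^T$ and $\Psi_{\nu,\mu}^\dagger=\Psi_{\nu,\mu}^T(\Psi_{\nu,\mu}\Psi_{\nu,\mu}^T)^{-1}$. In particular, $T_\mu^{-1}T_\nu$ is uniquely determined by the data $(u,\varphi,y)$ and the estimates $\hat{\mathcal P}$.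
   Context: **System data.** Consider the LSS $$x(k+1)=A_{\varphi(k)}x(k)+B_{\varphi(k)}u(k),\qquad y(k)=C_{\varphi(k)}x(k)+D_{\varphi(k)}u(k),$$ with $u(k)\in\mathbb{R}^m$, $y(k)\in\mathbb{R}^p$, $x(k)\in\mathbb{R}^n$. The switching sequence $\varphi:[1,N]\to\mathbb{S}=\{1,\dots,\sigma\}$ is surjective, and the discrete states are $\mathcal P_j=(A_j,B_j,C_j,D_j)$. **Switching times and dwell times.** Write $k_0=1<k_1<\dots<k_{i^*}<k_{i^*+1}=N$, where $\varphi$ is constant on each $[k_i,k_{i+1})$ and changes value at each $k_i$, $1\le i\le i^*$. Set $\delta_i=k_{i+1}-k_i$ and $\delta_*=\min_{0\le i\le i^*}\delta_i$. **Standing assumptions.** - Each $\mathcal P_j$ is minimal of McMillan degree $n$, has invertible $A_j$, and is BIBO stable. - $\delta_*\ge n$. - Local estimates $\hat{\mathcal P}_j=(\hat A_j,\hat B_j,\hat C_j,\hat D_j)$ are given, one per mode $j$. For some unknown nonsingular $T_j$ they satisfy $$\hat A_j=T_j^{-1}A_jT_j,\quad \hat B_j=T_j^{-1}B_j,\quad \hat C_j=C_jT_j,\quad \hat D_j=D_j.$$ **Constructions.** Let $q=\delta_*-1$. For a mode $j$, let $$\hat{\mathcal O}_j=[\hat C_j^T\ (\hat C_j\hat A_j)^T\cdots(\hat C_j\hat A_j^{q})^T]^T,$$ and let $\hat\Gamma_j$ be the block lower-triangular Toeplitz matrix with diagonal blocks $\hat D_j$ and $(r,s)$ block $\hat C_j\hat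 A_j^{r-s-1}\hat B_j$ for $r>s$ (block size $(q+1)\times(q+1)$). For $1\le i\le i^*$, write $\nu=\varphi(k_{i-1})$ and $\mu=\varphi(k_i)$. Define the following quantities. - The state estimate $$\hat x(k_{i-1})=\hat{\mathcal O}_\nu^\dagger\,(Y_{i-1}-\hat\Gamma_\nu U_{i-1}),$$ where $Y_{i-1}=[y(k_{i-1})^T\cdots y(k_{i-1}+q)^T]^T$ and $U_{i-1}$ is defined analogously from $u$. - The vector $$\kappa_{i-1}=\hat A_\nu^{k_i-k_{i-1}}\hat x(k_{i-1})+\sum_{l=k_{i-1}}^{k_i-1}\hat A_\nu^{k_i-l-1}\hat B_\nu u(l).$$ - For $k\in[k_i,k_{i+1})$, the corrected output $$\zeta_i(k)=y(k)-\hat D_\mu u(k)-\sum_{l=k_i}^{k-1}\hat C_\mu\hat A_\mu^{k-l-1}\hat B_\mu u(l),$$ where the sum is empty if $k=k_i$. - The stacked vector $Z_i=[\zeta_i(k_i)^T\cdots\zeta_i(k_i+q)^T]^T$. For $\nu\ne\mu$, let $\mathcal N_{\nu,\mu}=\{i\in[1,i^*]:\varphi(k_{i-1})=\nu,\ \varphi(k_i)=\mu\}$. Let $\Psi_{\nu,\mu}$ be the matrix whose columns are the vectors $\kappa_{i-1}$, and let $\mathcal Z_{\nu,\mu}$ be the matrix whose columns are the vectors $Z_i$, in both cases for $i\in\mathcal N_{\nu,\mu}$ taken in increasing order. *)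

(* Defs.v *)
From HB Require Import structures.
From mathcomp Require Import all_boot all_order all_algebra.
From mathcomp Require Import reals.
Set Implicit Arguments. Unset Strict Implicit. Unset Printing Implicit Defensive.
Import Order.TTheory GRing.Theory Num.Theory.
Local Open Scope ring_scope.

Section LTI.
Variable R : realType.

(* Kalman controllability / observability matrices and minimality
   (a realization of state dimension n that is minimal has McMillan degree n). *)
Definition controllable n m (A : 'M[R]_n) (B : 'M[R]_(n, m)) : bool :=
  \rank (\mxrow_(i < n) (A ^+ i *m B)) == n.
Definition observable n p (A : 'M[R]_n) (C : 'M[R]_(p, n)) : bool :=
  \rank (\mxcol_(i < n) (C *m A ^+ i)) == n.
Definition minimal n m p (A : 'M[R]_n) (B : 'M[R]_(n, m)) (C : 'M[R]_(p, n)) : bool :=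
  controllable A B && observable A C.

Definition lti_resp n m p (A : 'M[R]_n) (B : 'M[R]_(n, m)) (C : 'M[R]_(p, n))
  (D : 'M[R]_(p, m)) (u : nat -> 'cV[R]_m) (k : nat) : 'cV[R]_p :=
  D *m u k + \sum_(0 <= l < k) C *m A ^+ (k - l - 1) *m B *m u l.

Definition bounded_seq d (v : nat -> 'cV[R]_d) : Prop :=
  exists M : R, forall (k : nat) (i : 'I_d), `|v k i 0| <= M.

Definition BIBO_stable n m p (A : 'M[R]_n) (B : 'M[R]_(n, m)) (C : 'M[R]_(p, n))
  (D : 'M[R]_(p, m)) : Prop :=
  forall u : nat -> 'cV[R]_m, bounded_seq u -> bounded_seq (lti_resp A B C D u).

Definition obsmx q n p (A : 'M[R]_n) (C : 'M[R]_(p, n)) :=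
  \mxcol_(r < q.+1) (C *m A ^+ r).

Definition toeplitz q n m p (A : 'M[R]_n) (B : 'M[R]_(n, m)) (C : 'M[R]_(p, n))
  (D : 'M[R]_(p, m)) :=
  \mxblock_(r < q.+1, s < q.+1)
     (if (s < r)%N then C *m A ^+ (r - s - 1) *m B
      else if r == s then D else 0).

Definition stack q d (v : nat -> 'cV[R]_d) (k : nat) :=
  \mxcol_(r < q.+1) v (k + r)%N.

Definition ldag a b (O : 'M[R]_(a, b)) : 'M[R]_(b, a) := invmx (O^T *m O) *m O^T.
Definition rdag a b (P : 'M[R]_(a, b)) : 'M[R]_(b, a) := P^T *m invmx (P *m P^T).

End LTI.

Section Constructions.
Variables (R : realType) (n m p sig : nat).
Variables (Ah : 'I_sig -> 'M[R]_n) (Bh : 'I_sig -> 'M[R]_(n, m))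
          (Ch : 'I_sig -> 'M[R]_(p, n)) (Dh : 'I_sig -> 'M[R]_(p, m)).
Variables (phi : nat -> 'I_sig) (u : nat -> 'cV[R]_m) (y : nat -> 'cV[R]_p).
Variables (ks : nat -> nat) (istar N : nat).

Definition dstar : nat := \big[minn/N]_(i < istar.+1) (ks i.+1 - ks i)%N.
Definition qq : nat := (dstar).-1.

Definition xhat (i : nat) : 'cV[R]_n :=
  let nu := phi (ks i.-1) in
  ldag (obsmx qq (Ah nu) (Ch nu)) *m
    (stack qq y (ks i.-1) - toeplitz qq (Ah nu) (Bh nu) (Ch nu) (Dh nu) *m stack qq u (ks i.-1)).

(* kappa_{i-1} *)
Definition kappa (i : nat) : 'cV[R]_n :=
  let nu := phi (ks i.-1) in
  Ah nu ^+ (ks i - ks i.-1) *m xhat i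
  + \sum_(ks i.-1 <= l < ks i) Ah nu ^+ (ks i - l - 1) *m Bh nu *m u l.

Definition zeta (i k : nat) : 'cV[R]_p :=
  let mu := phi (ks i) in
  y k - Dh mu *m u k - \sum_(ks i <= l < k) Ch mu *m Ah mu ^+ (k - l - 1) *m Bh mu *m u l.

Definition Zst (i : nat) := stack qq (zeta i) (ks i).

Definition Nset (nu mu : 'I_sig) : seq nat :=
  [seq i <- iota 1 istar | (phi (ks i.-1) == nu) && (phi (ks i) == mu)].

Definition Psi (nu mu : 'I_sig) : 'M[R]_(n, size (Nset nu mu)) :=
  \matrix_(a < n, c < size (Nset nu mu)) kappa (nth 0%N (Nset nu mu) c) a 0.

Definition Zmat (nu mu : 'I_sig) : 'M[R]_(\sum_(r < qq.+1) p, size (Nset nu mu)) :=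
  \matrix_(a < \sum_(r < qq.+1) p, c < size (Nset nu mu))
     Zst (nth 0%N (Nset nu mu) c) a 0.

End Constructions.

(* Main.v *)
Require Import Defs.
From HB Require Import structures.
From mathcomp Require Import all_boot all_order all_algebra.
From mathcomp Require Import reals.
From mathcomp Require Import zify.
Import Order.TTheory GRing.Theory Num.Theory.
Local Open Scope ring_scope.

Lemma bigmin_le (I : eqType) (s : seq I) (F : I -> nat) (N : nat) j :
  j \in s -> (\big[minn/N]_(i <- s) F i <= F j)%N.
Proof.
elim: s => [//|a s IH]; rewrite in_cons big_cons => /orP [/eqP->|/IH H].
  by rewrite geq_minl.
by rewrite (leq_trans (geq_minr _ _) H).
Qed.

Lemma gram_unit (R : realFieldType) a b (O : 'M[R]_(a, b)) :
  \rank O = b -> O^T *m O \in unitmx.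
Proof.
move=> rO; rewrite -row_free_unit -kermx_eq0; apply/eqP/row_matrixP => i.
set v := row i (kermx (O^T *m O)).
have hv : v *m (O^T *m O) = 0 by rewrite /v -row_mul mulmx_ker row0.
have hw : (v *m O^T) *m (v *m O^T)^T = 0.
  by rewrite trmx_mul trmxK mulmxA -(mulmxA v) hv mul0mx.
have w0 : v *m O^T = 0.
  move: hw; move: (v *m O^T) => w hw.
  apply/matrixP => r c; rewrite [RHS]mxE (ord1 r).
  have := congr1 (fun M : 'M[R]_1 => M 0 0) hw; rewrite !mxE => /eqP.
  rewrite psumr_eq0; last by move=> k _; rewrite mxE -expr2 sqr_ge0.
  move=> /allP /(_ c (mem_index_enum _)) /implyP /(_ isT).
  by rewrite mxE -expr2 sqrf_eq0 => /eqP.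
have rf : row_free O^T by rewrite /row_free mxrank_tr rO.
rewrite row0; apply/eqP; by rewrite -(mulmx_free_eq0 _ rf) w0.
Qed.

Lemma conj_pow (R : realType) n (T A : 'M[R]_n) r : T \in unitmx ->
  (invmx T *m A *m T) ^+ r = invmx T *m A ^+ r *m T.
Proof.
move=> uT; elim: r => [|r IH]; first by rewrite !expr0 mulmx1 mulVmx.
rewrite !exprS IH -!mulmxE !mulmxA -[_ *m T *m invmx T]mulmxA mulmxV // mulmx1.
by [].
Qed.

Lemma resp (R : realType) n m sig (A : 'I_sig -> 'M[R]_n) (B : 'I_sig -> 'M[R]_(n, m))
  (x : nat -> 'cV[R]_n) (u : nat -> 'cV[R]_m) (phi : nat -> 'I_sig) (N : nat)
  (hx : forall k, (1 <= k < N)%N -> x k.+1 = A (phi k) *m x k + B (phi k) *m u k)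
  k0 j k :
  (k0 <= k)%N -> (forall l, (k0 <= l < k)%N -> (1 <= l < N)%N /\ phi l = j) ->
  x k = A j ^+ (k - k0) *m x k0 + \sum_(k0 <= l < k) A j ^+ (k - l - 1) *m B j *m u l.
Proof.
elim: k => [|k IH] Hk H.
  have -> : k0 = 0%N by lia.
  by rewrite big_geq // expr0 mul1mx addr0.
case: (ltnP k k0) => Hkk.
  have -> : k0 = k.+1 by lia.
  by rewrite subnn big_geq // expr0 mul1mx addr0.
have [H1 H2] := H k (ltac:(lia)).
rewrite hx // H2 IH //; last by move=> l Hl; apply: H; lia.
have E r : A j *m A j ^+ r = A j ^+ r.+1 by rewrite exprS.
rewrite big_nat_recr //= mulmxDr addrA mulmxA E.
have -> : (k.+1 - k0 = (k - k0).+1)%N by lia.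
have -> : (k.+1 - k - 1 = 0)%N by lia.
rewrite expr0 mul1mx mulmx_sumr -!addrA; congr (_ + _); congr (_ + _).
apply/esym/eq_big_nat => l Hl.
have -> : (k.+1 - l - 1 = (k - l - 1).+1)%N by lia.
by rewrite -E !mulmxA.
Qed.

Lemma toep_sum (R : realType) n m p (A : 'M[R]_n) (B : 'M[R]_(n, m))
  (C : 'M[R]_(p, n)) (D : 'M[R]_(p, m)) (u : nat -> 'cV[R]_m) q k0 (r : 'I_q.+1) :
  \sum_(s < q.+1) ((if (s < r)%N then C *m A ^+ (r - s - 1) *m B
      else if r == s then D else 0) *m u (k0 + s)%N)
  = C *m \sum_(k0 <= l < k0 + r) A ^+ (k0 + r - l - 1) *m B *m u l + D *m u (k0 + r)%N.
Proof.
rewrite (bigID (fun s : 'I_q.+1 => (s < r)%N)) /=; congr (_ + _).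
  have -> : \sum_(k0 <= l < k0 + r) A ^+ (k0 + r - l - 1) *m B *m u l =
     \sum_(0 <= s < r) A ^+ (k0 + r - (s + k0) - 1) *m B *m u (s + k0).
    by rewrite -{1}[k0]add0n big_addn addKn.
  rewrite mulmx_sumr (big_nat_widen _ _ q.+1); last exact: ltnW (ltn_ord r).
  rewrite big_mkord.
  apply: eq_big => // s Hs.
  rewrite Hs !mulmxA; have -> : (k0 + r - (s + k0) - 1 = r - s - 1)%N by lia.
  by rewrite addnC.
rewrite (bigD1 r) /=; last by rewrite ltnn.
rewrite ltnn eqxx big1 ?addr0 // => s /andP [Hs Hsr].
by rewrite (negbTE Hs) eq_sym (negbTE Hsr) mul0mx.
Qed.

Lemma obs_stack (R : realType) n m p sig (A : 'I_sig -> 'M[R]_n) (B : 'I_sig -> 'M[R]_(n, m))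
  (C : 'I_sig -> 'M[R]_(p, n)) (D : 'I_sig -> 'M[R]_(p, m))
  (x : nat -> 'cV[R]_n) (u : nat -> 'cV[R]_m) (y : nat -> 'cV[R]_p)
  (phi : nat -> 'I_sig) (N : nat)
  (hx : forall k, (1 <= k < N)%N -> x k.+1 = A (phi k) *m x k + B (phi k) *m u k)
  (hy : forall k, (1 <= k <= N)%N -> y k = C (phi k) *m x k + D (phi k) *m u k)
  q k0 j :
  (forall l, (k0 <= l <= k0 + q)%N -> (1 <= l <= N)%N /\ phi l = j) ->
  stack q y k0 - toeplitz q (A j) (B j) (C j) (D j) *m stack q u k0
  = obsmx q (A j) (C j) *m x k0.
Proof.
move=> H.
rewrite /stack /toeplitz /obsmx mul_mxblock_mxrow mxcol_mul -mxcolB.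
apply: eq_mxcol => r.
have [Hr1 Hr2] := H (k0 + r)%N ltac:(have := ltn_ord r; lia).
rewrite hy // Hr2 (@resp _ _ _ _ A B x u phi N hx k0 j (k0 + r)) ?leq_addr //; last first.
  move=> l Hl; have [H1 H2] := H l ltac:(have := ltn_ord r; lia).
  split=> //; have := ltn_ord r; lia.
rewrite toep_sum addKn mulmxDr -!mulmxA.
set a := C j *m (A j ^+ r *m x k0).
set b := C j *m _.
set c := D j *m _.
by rewrite -[a + b + c]addrA addrK.
Qed.

Lemma toep_hat (R : realType) n m p (A T : 'M[R]_n) (B : 'M[R]_(n, m))
  (C : 'M[R]_(p, n)) (D : 'M[R]_(p, m)) q : T \in unitmx ->
  toeplitz q (invmx T *m A *m T) (invmx T *m B) (C *m T) D = toeplitz q A B C D.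
Proof.
move=> uT; rewrite /toeplitz; apply: eq_mxblock => r s.
case: ifP => // _; rewrite conj_pow // !mulmxA -(mulmxA C T) mulmxV // mulmx1.
by rewrite -(mulmxA _ T) mulmxV // mulmx1.
Qed.

Lemma obs_hat (R : realType) n p (A T : 'M[R]_n) (C : 'M[R]_(p, n)) q : T \in unitmx ->
  obsmx q (invmx T *m A *m T) (C *m T) = obsmx q A C *m T.
Proof.
move=> uT; rewrite /obsmx mxcol_mul; apply: eq_mxcol => r.
by rewrite conj_pow // !mulmxA -(mulmxA C T) mulmxV // mulmx1.
Qed.

Lemma obs_rank (R : realType) n p (A : 'M[R]_n) (C : 'M[R]_(p, n)) q :
  observable A C -> (n <= q.+1)%N -> \rank (obsmx q A C) = n.
Proof.
move=> /eqP hO hn; apply/eqP; rewrite eqn_leq rank_leq_col /= -[X in (X <= _)%N]hO.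
set S := \mxblock_(i < n, r < q.+1) (if (i == r :> nat) then 1%:M else 0 : 'M[R]_(p, p)).
have -> : \mxcol_(i < n) (C *m A ^+ i) = S *m obsmx q A C.
  rewrite /S /obsmx mul_mxblock_mxrow; apply: eq_mxcol => i.
  have hi : (i < q.+1)%N by apply: leq_trans hn.
  rewrite (bigD1 (Ordinal hi)) //= eqxx mul1mx big1 ?addr0 // => r hr.
  case: ifP => [/eqP Er|]; last by rewrite mul0mx.
  by move: hr; rewrite -val_eqE /= Er eqxx.
exact: mxrankM_maxr.
Qed.

Lemma ldagK (R : realType) a b (O : 'M[R]_(a, b)) c (V : 'M[R]_(b, c)) :
  \rank O = b -> ldag O *m (O *m V) = V.
Proof.
move=> rO; rewrite /ldag -mulmxA [O^T *m (O *m V)]mulmxA mulmxA mulVmx ?mul1mx //.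
exact: gram_unit.
Qed.

Lemma rdagK (R : realType) a b (P : 'M[R]_(a, b)) c (V : 'M[R]_(c, a)) :
  \rank P = a -> V *m P *m rdag P = V.
Proof.
move=> rP; rewrite /rdag -mulmxA [P *m _]mulmxA mulmxV ?mulmx1 //.
have := @gram_unit R _ _ P^T; rewrite trmxK; apply; by rewrite mxrank_tr.
Qed.

Theorem theorem1 (R : realType) (n m p sig : nat)
  (A : 'I_sig -> 'M[R]_n) (B : 'I_sig -> 'M[R]_(n, m))
  (C : 'I_sig -> 'M[R]_(p, n)) (D : 'I_sig -> 'M[R]_(p, m))
  (x : nat -> 'cV[R]_n) (u : nat -> 'cV[R]_m) (y : nat -> 'cV[R]_p)
  (phi : nat -> 'I_sig) (N istar : nat) (ks : nat -> nat)
  (Ah : 'I_sig -> 'M[R]_n) (Bh : 'I_sig -> 'M[R]_(n, m))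
  (Ch : 'I_sig -> 'M[R]_(p, n)) (Dh : 'I_sig -> 'M[R]_(p, m))
  (T : 'I_sig -> 'M[R]_n)
  (nu mu : 'I_sig) :
  (2 <= n)%N ->
  (* the LSS *)
  (forall k, (1 <= k < N)%N -> x k.+1 = A (phi k) *m x k + B (phi k) *m u k) ->
  (forall k, (1 <= k <= N)%N -> y k = C (phi k) *m x k + D (phi k) *m u k) ->
  (* phi : [1,N] -> S is surjective *)
  (forall j : 'I_sig, exists k, (1 <= k <= N)%N /\ phi k = j) ->
  (* switching times *)
  ks 0%N = 1%N -> ks istar.+1 = N ->
  (forall i, (i <= istar)%N -> (ks i < ks i.+1)%N) ->
  (forall i k, (i <= istar)%N -> (ks i <= k < ks i.+1)%N -> phi k = phi (ks i)) ->
  (forall i, (1 <= i <= istar)%N -> phi (ks i) != phi (ks i).-1) ->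
  (* standing assumptions on the modes *)
  (forall j, minimal (A j) (B j) (C j)) ->
  (forall j, A j \in unitmx) ->
  (forall j, BIBO_stable (A j) (B j) (C j) (D j)) ->
  (n <= dstar ks istar N)%N ->
  (* local estimates *)
  (forall j, T j \in unitmx) ->
  (forall j, Ah j = invmx (T j) *m A j *m T j) ->
  (forall j, Bh j = invmx (T j) *m B j) ->
  (forall j, Ch j = C j *m T j) ->
  (forall j, Dh j = D j) ->
  (* the pair (nu, mu) *)
  nu != mu ->
  Nset phi ks istar nu mu != [::] ->
  \rank (Psi Ah Bh Ch Dh phi u y ks istar N nu mu) = n ->
  invmx (T mu) *m T nu =
    ldag (obsmx (qq ks istar N) (Ah mu) (Ch mu))
      *m Zmat Ah Bh Ch Dh phi u y ks istar N nu mu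
      *m rdag (Psi Ah Bh Ch Dh phi u y ks istar N nu mu).
Proof.
move=> n2 hx hy _ ks0 ksN kinc kconst _ hmin _ _ hd uT hA hB hC hD _ _ rPsi.
set q := qq ks istar N.
have dq : dstar ks istar N = q.+1 by rewrite /q /qq; lia.
have mono : forall a b, (a <= b <= istar.+1)%N -> (ks a <= ks b)%N.
  move=> a; elim=> [|b IH] Hab; first by have -> : a = 0%N by lia.
  case: (ltnP a b.+1) => Ha; last by have -> : a = b.+1 by lia.
  have := kinc b ltac:(lia); have := IH ltac:(lia); lia.
have ks1 : forall a, (a <= istar.+1)%N -> (1 <= ks a)%N.
  by move=> a Ha; rewrite -ks0; apply: mono; lia.
have ksN' : forall a, (a <= istar.+1)%N -> (ks a <= N)%N.
  by move=> a Ha; rewrite -ksN; apply: mono; lia.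
have dw : forall i, (i <= istar)%N -> (ks i + q < ks i.+1)%N.
  move=> i Hi.
  have := @bigmin_le _ (index_enum 'I_istar.+1) (fun i : 'I_istar.+1 => ks i.+1 - ks i)%N N
    (Ordinal (n:=istar.+1) (m:=i) Hi) (mem_index_enum _).
  rewrite -/(dstar ks istar N) dq /=; have := kinc i Hi; lia.
have hq : (n <= q.+1)%N by rewrite -dq.
have intv : forall i l, (i <= istar)%N -> (ks i <= l <= ks i + q)%N ->
    (1 <= l <= N)%N /\ phi l = phi (ks i).
  move=> i l Hi Hl; have := dw i Hi; have := ks1 i ltac:(lia); have := ksN' i.+1 ltac:(lia).
  move=> h1 h2 h3; split; first lia.
  apply: kconst => //; lia.
have rkO : forall j, \rank (obsmx q (A j) (C j) *m T j) = n.
  move=> j; rewrite mxrankMfree ?obs_rank //; last by rewrite row_free_unit.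
  by case/andP: (hmin j).
have xh : forall i, (1 <= i <= istar)%N ->
    xhat Ah Bh Ch Dh phi u y ks istar N i = invmx (T (phi (ks i.-1))) *m x (ks i.-1).
  move=> i Hi; rewrite /xhat /= -/q.
  set j := phi (ks i.-1).
  rewrite hA hB hC hD toep_hat //.
  rewrite (@obs_stack R n m p sig A B C D x u y phi N hx hy q (ks i.-1) j); last first.
    move=> l Hl; apply: intv => //; lia.
  rewrite obs_hat //.
  have -> : obsmx q (A j) (C j) *m x (ks i.-1) =
    obsmx q (A j) (C j) *m T j *m (invmx (T j) *m x (ks i.-1)).
    by rewrite mulmxA mulmxK.
  by rewrite ldagK.
have kap : forall i, (1 <= i <= istar)%N ->
    kappa Ah Bh Ch Dh phi u y ks istar N i = invmx (T (phi (ks i.-1))) *m x (ks i).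
  move=> i Hi; rewrite /kappa /= xh //.
  set j := phi (ks i.-1).
  have ei : i.-1.+1 = i by lia.
  rewrite (@resp R n m sig A B x u phi N hx (ks i.-1) j (ks i)); first last.
  - move=> l Hl; have := ks1 i.-1 ltac:(lia); have := ksN' i ltac:(lia); move=> h1 h2.
    split; first lia.
    apply: kconst; first lia; rewrite ei; lia.
  - apply: mono; lia.
  rewrite hA hB conj_pow // mulmxDr mulmx_sumr; congr (_ + _).
    by rewrite !mulmxA (mulmxK (uT j)).
  by apply: eq_bigr => l _; rewrite conj_pow // !mulmxA (mulmxK (uT j)).
have zt : forall i, (1 <= i <= istar)%N ->
    Zst Ah Bh Ch Dh phi u y ks istar N i =
    obsmx q (Ah (phi (ks i))) (Ch (phi (ks i))) *m (invmx (T (phi (ks i))) *m x (ks i)).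
  move=> i Hi; rewrite /Zst -/q /stack /obsmx mxcol_mul; apply: eq_mxcol => r.
  rewrite /zeta /=; set j := phi (ks i).
  have hr := ltn_ord r.
  have [H1 H2] := intv i (ks i + r)%N ltac:(lia) ltac:(lia).
  rewrite hy // H2 (@resp R n m sig A B x u phi N hx (ks i) j (ks i + r)); first last.
  - move=> l Hl; have [h1 h2] := intv i l ltac:(lia) ltac:(lia).
    split=> //; have := dw i ltac:(lia); have := ksN' i.+1 ltac:(lia); lia.
  - exact: leq_addr.
  rewrite hA hB hC hD addKn.
  have -> : \sum_(ks i <= l < ks i + r)
      C j *m T j *m (invmx (T j) *m A j *m T j) ^+ (ks i + r - l - 1) *m (invmx (T j) *m B j) *m u l
      = C j *m \sum_(ks i <= l < ks i + r) A j ^+ (ks i + r - l - 1) *m B j *m u l.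
    rewrite mulmx_sumr; apply: eq_bigr => l _.
    by rewrite conj_pow // !mulmxA !(mulmxK (uT j)).
  rewrite conj_pow // !mulmxA !(mulmxK (uT j)) mulmxDr addrK addrK.
  by rewrite mulmxA.
set O := obsmx q (Ah mu) (Ch mu).
have rO : \rank O = n by rewrite /O hA hC obs_hat // rkO.
have Zeq : Zmat Ah Bh Ch Dh phi u y ks istar N nu mu =
    O *m (invmx (T mu) *m T nu) *m Psi Ah Bh Ch Dh phi u y ks istar N nu mu.
  apply/matrixP => a c; rewrite [LHS]mxE [RHS]mxE.
  set i := nth 0%N (Nset phi ks istar nu mu) c.
  have : i \in Nset phi ks istar nu mu by apply: mem_nth.
  rewrite /Nset mem_filter mem_iota => /andP [/andP [/eqP Hnu /eqP Hmu] Hi].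
  have Hi' : (1 <= i <= istar)%N by lia.
  rewrite zt // Hmu.
  have -> : invmx (T mu) *m x (ks i) = invmx (T mu) *m T nu *m (invmx (T nu) *m x (ks i)).
    by rewrite mulmxA mulmxK.
  rewrite -/O [O *m (_ *m _)]mulmxA mxE; apply: eq_bigr => k _.
  congr (_ * _); rewrite /Psi [RHS]mxE -/i kap // Hnu.
  by [].
rewrite Zeq.
have -> : ldag O *m (O *m (invmx (T mu) *m T nu) *m Psi Ah Bh Ch Dh phi u y ks istar N nu mu)
   = invmx (T mu) *m T nu *m Psi Ah Bh Ch Dh phi u y ks istar N nu mu.
  by rewrite -mulmxA ldagK // mulmxA.
by rewrite rdagK.
Qed.
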